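(* Let $Z=(X,Y)\in G_m(1)$. Then for every transition function $\varphi$ there exists $\epsilon_0>0$ such that for all $0<\epsilon\le\epsilon_0$ all singular points of $\mathcal P(Z)_\epsilon$ in $S^2$ are hyperbolic.
   Context: Fix $m\ge1$. $\chi_m$ is the space of real polynomial vector fields $X=P\partial_x+Q\partial_y$ on $\mathbb R^2$ with $\deg P,\deg Q\le m$, identified with coefficient vectors in $\mathbb R^{(m+1)(m+2)}$; $\deg X=\max\{\deg P,\deg Q\}$. Let $f(x,y)=y$, $D=\{y=0\}$, $N=\{y>0\}$, $S=\{y<0\}$. $\Omega_m$ is the set of pairs $Z=(X,Y)$, $X,Y\in\chi_m$ of degree exactly $m$, regarded as the discontinuous vector field equal to $X$ on $\{y\ge0\}$ and $Y$ on $\{y\le0\}$. For $X\in\chi_m$, $\mathcal P(X)$ is the unique analytic vector field tangent to $S^2=\{x^2+y^2+z^2=1\}$ whose restriction to $S^2_+=\{z>0\}$ is $z^{m-1}\wp^*(X)$, $\wp(u,v)=(u,v,1)/\sqrt{u^2+v^2+1}$; $S^1=\{z=0\}$ is invariant. $\mathcal P(Z)=(\mathcal P(X),\mathcal P(Y))$ is the discontinuous field on the sphere equal to $\mathcal P(X)$ where $y\ge0$, $\mathcal P(Y)$ where $y\le0$, with $f(x,y,z)=y$, $D=\{y=0\}$, $N=\{y>0\}$, $S=\{y<0\}$. A transition function is a $C^\infty$ $\varphi:\mathbb R\to\mathbb R$ with $\varphi=0$ on $(-\infty,-1]$, $\varphi=1$ on $[1,\infty)$, $\varphi'>0$ on $(-1,1)$.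 $\mathcal P(Z)_\epsilon(q)=(1-\varphi_\epsilon(f(q)))\mathcal P(Y)(q)+\varphi_\epsilon(f(q))\mathcal P(X)(q)$, $\varphi_\epsilon(t)=\varphi(t/\epsilon)$. For a discontinuous field $(U,V)$ write $Uf=\langle\nabla f,U\rangle$, $U^2f=U(Uf)$. Escaping arc: $Uf>0,Vf<0$; sliding arc: $Uf<0,Vf>0$; on these the Filippov vector field $F(p)$ is the vector in the cone spanned by $U(p),V(p)$ tangent to $D$. A fold point is $p\in D$ with $Vf(p)\neq0,Uf(p)=0,U^2f(p)\neq0$ or $Uf(p)\neq0,Vf(p)=0,V^2f(p)\neq0$. A hyperbolic singular point of $F$ is $p\in D$ with $Uf(p)Vf(p)<0$, $\det[U,V](p)=0$ and nonzero derivative at $p$ of $\det[U,V]|_D$. A $D$-singularity is a point of $D$ that is not $D$-regular ($p$ is $D$-regular if $Uf(p)Vf(p)>0$, or $Uf(p)Vf(p)<0$ and $\det[U,V](p)\neq0$); it is elementary if it is a fold point or a hyperbolic singular point of $F$. $\mathcal S_m$ is the set of $X\in\chi_m$ such that $\mathcal P(X)$ has all singular points hyperbolic, all periodic orbits hyperbolic, and no saddle connections in $S^2$ except those contained in $S^1$; ''$X|_N\in\mathcal S_m$'' (resp. ''$Y|_S\in\mathcal S_m$'') means these three conditions hold for $\mathcal P(X)$ restricted to $N$ (resp. $\mathcal P(Y)$ restricted to $S$). $G_m(1)$ is the set of $Z=(X,Y)\in\Omega_m$ with $X|_N,Y|_S\in\mathcal S_m$ and every $D$-singularity of $\mathcal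 P(Z)=(U,V)$ elementary. *)

(* Defs.v *)
From Stdlib Require Import Reals.
Open Scope R_scope.

Definition R3 : Type := (R * R * R)%type.
Definition cx (q : R3) : R := fst (fst q).
Definition cy (q : R3) : R := snd (fst q).
Definition cz (q : R3) : R := snd q.
Definition v0 : R3 := (0, 0, 0).
Definition vadd (p q : R3) : R3 := (cx p + cx q, cy p + cy q, cz p + cz q).
Definition vscale (a : R) (q : R3) : R3 := (a * cx q, a * cy q, a * cz q).
Definition dot (p q : R3) : R := cx p * cx q + cy p * cy q + cz p * cz q.
Definition dist2 (p q : R3) : R :=
  (cx p - cx q)^2 + (cy p - cy q)^2 + (cz p - cz q)^2.
(* triple product  det(p, u, v) = p . (u x v) *)
Definition det3 (p u v : R3) : R :=
  cx p * (cy u * cz v - cz u * cy v)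
  - cy p * (cx u * cz v - cz u * cx v)
  + cz p * (cx u * cy v - cy u * cx v).

Definition sphere (q : R3) : Prop := cx q ^ 2 + cy q ^ 2 + cz q ^ 2 = 1.
Definition tangent (q u : R3) : Prop := dot q u = 0.

(* vector fields on (a neighbourhood of) the sphere, given on R^3 *)
Definition VF3 : Type := R3 -> R3.

(* A real polynomial in (x,y) is given by its coefficients p i j of x^i y^j. *)
Definition Poly2 : Type := nat -> nat -> R.
Definition poly_deg_le (m : nat) (p : Poly2) : Prop :=
  forall i j : nat, (m < i + j)%nat -> p i j = 0.

(* homogenization of degree m:  z^m p(x/z, y/z) = sum p_ij x^i y^j z^(m-i-j) *)
Definition hom_eval (m : nat) (p : Poly2) (x y z : R) : R :=
  sum_f_R0 (fun i =>
    sum_f_R0 (fun j => p i j * x ^ i * y ^ j * z ^ (m - i - j)) (m - i)) m.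

(* X = P d/dx + Q d/dy *)
Record PVF : Type := mkPVF { pP : Poly2 ; pQ : Poly2 }.

Definition in_chi (m : nat) (X : PVF) : Prop :=
  poly_deg_le m (pP X) /\ poly_deg_le m (pQ X).

Definition deg_exact (m : nat) (X : PVF) : Prop :=
  in_chi m X /\
  exists i j : nat, (i + j = m)%nat /\ (pP X i j <> 0 \/ pQ X i j <> 0).

(* Poincare compactification P(X) on S^2 (written as a polynomial field on
   R^3 tangent to S^2): the analytic field which equals z^(m-1) times the pullback of X by wp on
   z > 0.  With P*, Q* the degree-m homogenizations of P, Q:
     xdot = (1-x^2) P* - x y Q*,  ydot = -x y P* + (1-y^2) Q*,
     zdot = - z (x P* + y Q* ). *)
Definition poinc (m : nat) (X : PVF) : VF3 := fun q =>
  let x := cx q in let y := cy q in let z := cz q in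
  let Ps := hom_eval m (pP X) x y z in
  let Qs := hom_eval m (pQ X) x y z in
  ((1 - x ^ 2) * Ps - x * y * Qs,
   - x * y * Ps + (1 - y ^ 2) * Qs,
   - z * (x * Ps + y * Qs)).

Definition dderiv_s (g : R3 -> R) (q u : R3) (l : R) : Prop :=
  derivable_pt_lim (fun t => g (vadd q (vscale t u))) 0 l.
Definition dderiv (W : VF3) (q u L : R3) : Prop :=
  dderiv_s (fun p => cx (W p)) q u (cx L) /\
  dderiv_s (fun p => cy (W p)) q u (cy L) /\
  dderiv_s (fun p => cz (W p)) q u (cz L).

Definition curve_deriv (g : R -> R3) (t : R) (L : R3) : Prop :=
  derivable_pt_lim (fun s => cx (g s)) t (cx L) /\
  derivable_pt_lim (fun s => cy (g s)) t (cy L) /\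
  derivable_pt_lim (fun s => cz (g s)) t (cz L).

Definition integral_curve (W : VF3) (g : R -> R3) : Prop :=
  forall t, curve_deriv g t (W (g t)).

(* Hyperbolic singular point of W on S^2: W(q) = 0 and the linearization
   A = DW(q) restricted to T_q S^2 has no eigenvalue i b with b real, i.e.
   no nonzero complex eigenvector u + i v (u, v tangent) with
   A u = -b v,  A v = b u. *)
Definition hyperbolic_sing (W : VF3) (q : R3) : Prop :=
  sphere q /\ W q = v0 /\
  forall (b : R) (u v Lu Lv : R3),
    tangent q u -> tangent q v ->
    dderiv W q u Lu -> dderiv W q v Lv ->
    Lu = vscale (- b) v -> Lv = vscale b u ->
    u = v0 /\ v = v0.

Definition saddle (W : VF3) (q : R3) : Prop :=
  hyperbolic_sing W q /\
  exists (l1 l2 : R) (u1 u2 L1 L2 : R3),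
    l1 < 0 /\ 0 < l2 /\
    tangent q u1 /\ tangent q u2 /\ u1 <> v0 /\ u2 <> v0 /\
    dderiv W q u1 L1 /\ L1 = vscale l1 u1 /\
    dderiv W q u2 L2 /\ L2 = vscale l2 u2.

Definition nonconstant (g : R -> R3) : Prop := exists t1 t2, g t1 <> g t2.

Definition periodic_orbit (W : VF3) (A : R3 -> Prop) (g : R -> R3) (T : R)
  : Prop :=
  integral_curve W g /\ (forall t, sphere (g t) /\ A (g t)) /\
  nonconstant g /\ 0 < T /\ (forall t, g (t + T) = g t).

Definition var_sol (W : VF3) (g : R -> R3) (xi : R -> R3) : Prop :=
  forall t, exists L, dderiv W (g t) (xi t) L /\ curve_deriv xi t L.

(* Hyperbolicity of all periodic orbits in A: the monodromy map
   M = Phi(T) on T_p S^2 (p = g 0) fixes W(p); the nontrivial characteristic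
   multiplier (eigenvalue of the map induced on T_p S^2 / span W(p)) is not of
   modulus 1. *)
Definition all_periodic_hyperbolic (W : VF3) (A : R3 -> Prop) : Prop :=
  forall (g : R -> R3) (T : R), periodic_orbit W A g T ->
  forall (v : R3) (xi : R -> R3) (mu c : R),
    tangent (g 0) v -> var_sol W g xi -> xi 0 = v ->
    Rabs mu = 1 ->
    xi T = vadd (vscale mu v) (vscale c (W (g 0))) ->
    exists k, v = vscale k (W (g 0)).

Definition tends_pinf (g : R -> R3) (s : R3) : Prop :=
  forall e, 0 < e -> exists T0, forall t, T0 <= t -> dist2 (g t) s < e.
Definition tends_minf (g : R -> R3) (s : R3) : Prop :=
  forall e, 0 < e -> exists T0, forall t, t <= T0 -> dist2 (g t) s < e.

Definition saddle_connection (W : VF3) (A : R3 -> Prop) (g : R -> R3)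
  : Prop :=
  integral_curve W g /\ (forall t, sphere (g t) /\ A (g t)) /\
  nonconstant g /\
  exists s1 s2, saddle W s1 /\ saddle W s2 /\ A s1 /\ A s2 /\
                tends_minf g s1 /\ tends_pinf g s2.

Definition no_saddle_conn_except_S1 (W : VF3) (A : R3 -> Prop) : Prop :=
  forall g, saddle_connection W A g -> forall t, cz (g t) = 0.

Definition in_S_on (W : VF3) (A : R3 -> Prop) : Prop :=
  (forall q, sphere q -> A q -> W q = v0 -> hyperbolic_sing W q) /\
  all_periodic_hyperbolic W A /\
  no_saddle_conn_except_S1 W A.

Definition Nreg (q : R3) : Prop := 0 < cy q.
Definition Sreg (q : R3) : Prop := cy q < 0.
Definition inD (q : R3) : Prop := sphere q /\ cy q = 0.

(* U f = <grad f, U> *)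
Definition Uf (U : VF3) (p : R3) : R := cy (U p).
Definition U2f (U : VF3) (p : R3) (l : R) : Prop :=
  dderiv_s (fun q => cy (U q)) p (U p) l.

(* det[U,V](p) for tangent vectors at p in S^2 (oriented area form) *)
Definition detUV (U V : VF3) (p : R3) : R := det3 p (U p) (V p).

Definition fold_point (U V : VF3) (p : R3) : Prop :=
  inD p /\
  ((Uf V p <> 0 /\ Uf U p = 0 /\ exists l, U2f U p l /\ l <> 0) \/
   (Uf U p <> 0 /\ Uf V p = 0 /\ exists l, U2f V p l /\ l <> 0)).

Definition filippov_hyp_sing (U V : VF3) (p : R3) : Prop :=
  inD p /\ Uf U p * Uf V p < 0 /\ detUV U V p = 0 /\
  exists th0 l, p = (cos th0, 0, sin th0) /\
    derivable_pt_lim (fun th => detUV U V (cos th, 0, sin th)) th0 l /\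
    l <> 0.

Definition D_regular (U V : VF3) (p : R3) : Prop :=
  0 < Uf U p * Uf V p \/ (Uf U p * Uf V p < 0 /\ detUV U V p <> 0).

Definition D_sing_elementary (U V : VF3) : Prop :=
  forall p, inD p -> ~ D_regular U V p ->
    fold_point U V p \/ filippov_hyp_sing U V p.

Definition G_m1 (m : nat) (X Y : PVF) : Prop :=
  deg_exact m X /\ deg_exact m Y /\
  in_S_on (poinc m X) Nreg /\ in_S_on (poinc m Y) Sreg /\
  D_sing_elementary (poinc m X) (poinc m Y).

Definition smooth (phi : R -> R) : Prop :=
  exists d : nat -> R -> R,
    (forall x, d O x = phi x) /\
    (forall n x, derivable_pt_lim (d n) x (d (S n) x)).

Definition transition_fun (phi : R -> R) : Prop :=
  smooth phi /\
  (forall t, t <= -1 -> phi t = 0) /\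
  (forall t, 1 <= t -> phi t = 1) /\
  (forall t, -1 < t < 1 -> exists l, derivable_pt_lim phi t l /\ 0 < l).

Definition regularization (m : nat) (X Y : PVF) (phi : R -> R) (eps : R)
  : VF3 := fun q =>
  vadd (vscale (1 - phi (cy q / eps)) (poinc m Y q))
       (vscale (phi (cy q / eps)) (poinc m X q)).

(* Main.v *)
Require Import Defs.
From Stdlib Require Import Reals Lra Lia Psatz Classical ClassicalEpsilon FunctionalExtensionality.
Open Scope R_scope.

Lemma R3_eq (p q : R3) : cx p = cx q -> cy p = cy q -> cz p = cz q -> p = q.
Proof. destruct p as [[a b] c], q as [[a' b'] c']; unfold cx, cy, cz; simpl; intros; subst; reflexivity. Qed.

Lemma cx_mk a b c : cx (a,b,c) = a. Proof. reflexivity. Qed.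
Lemma cy_mk a b c : cy (a,b,c) = b. Proof. reflexivity. Qed.
Lemma cz_mk a b c : cz (a,b,c) = c. Proof. reflexivity. Qed.

Lemma dpl_ext (f g : R -> R) x l : (forall y, f y = g y) -> derivable_pt_lim f x l -> derivable_pt_lim g x l.
Proof. intros E H. replace g with f; auto. apply functional_extensionality; auto. Qed.

Lemma dpl_val (f : R -> R) x l1 l2 : l1 = l2 -> derivable_pt_lim f x l1 -> derivable_pt_lim f x l2.
Proof. intros ->; auto. Qed.

Definition hasD (f : R3 -> R) (G : R3 -> R3) : Prop :=
  forall g t L, curve_deriv g t L -> derivable_pt_lim (fun s => f (g s)) t (dot (G (g t)) L).

Definition cv3 (qn : nat -> R3) (p : R3) : Prop :=
  Un_cv (fun n => cx (qn n)) (cx p) /\ Un_cv (fun n => cy (qn n)) (cy p) /\ Un_cv (fun n => cz (qn n)) (cz p).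

Definition seqc (f : R3 -> R) : Prop := forall qn p, cv3 qn p -> Un_cv (fun n => f (qn n)) (f p).

Definition GoodD (f : R3 -> R) (G : R3 -> R3) : Prop :=
  hasD f G /\ seqc f /\ seqc (fun p => cx (G p)) /\ seqc (fun p => cy (G p)) /\ seqc (fun p => cz (G p)).

Definition Good f := exists G, GoodD f G.

Lemma cv_const (c : R) : Un_cv (fun _ => c) c.
Proof. intros e He; exists 0%nat; intros; unfold Rdist; rewrite Rminus_diag, Rabs_R0; auto. Qed.

Lemma cv_ext (u v : nat -> R) l : (forall n, u n = v n) -> Un_cv u l -> Un_cv v l.
Proof. intros E H e He; destruct (H e He) as [N HN]; exists N; intros; rewrite <- E; auto. Qed.

Lemma cv_opp u l : Un_cv u l -> Un_cv (fun n => - u n) (- l).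
Proof. apply CV_opp. Qed.
Lemma cv_minus u v l1 l2 : Un_cv u l1 -> Un_cv v l2 -> Un_cv (fun n => u n - v n) (l1 - l2).
Proof. apply CV_minus. Qed.

Lemma seqc_const c : seqc (fun _ => c).
Proof. intros qn p _; apply cv_const. Qed.
Lemma seqc_cx : seqc cx. Proof. intros qn p H; apply H. Qed.
Lemma seqc_cy : seqc cy. Proof. intros qn p H; apply H. Qed.
Lemma seqc_cz : seqc cz. Proof. intros qn p H; apply H. Qed.
Lemma seqc_plus f g : seqc f -> seqc g -> seqc (fun p => f p + g p).
Proof. intros Hf Hg qn p H; apply CV_plus; auto. Qed.
Lemma seqc_mult f g : seqc f -> seqc g -> seqc (fun p => f p * g p).
Proof. intros Hf Hg qn p H; apply CV_mult; auto. Qed.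
Lemma seqc_minus f g : seqc f -> seqc g -> seqc (fun p => f p - g p).
Proof. intros Hf Hg qn p H; apply CV_minus; auto. Qed.
Lemma seqc_ext f g : (forall p, f p = g p) -> seqc f -> seqc g.
Proof. intros E H qn p Hc; rewrite <- E; apply (cv_ext (fun n => f (qn n))); auto. Qed.

Lemma hasD_ext f g G : (forall p, f p = g p) -> hasD f G -> hasD g G.
Proof. intros E H c t L HL. apply (dpl_ext (fun s => f (c s))); auto. Qed.

Lemma hasD_const a : hasD (fun _ => a) (fun _ => v0).
Proof. intros g t L _. apply (dpl_val _ _ 0). unfold dot, v0, cx, cy, cz; simpl; ring.
  apply (derivable_pt_lim_const a t). Qed.

Lemma hasD_cx : hasD cx (fun _ => (1,0,0)).
Proof. intros g t L [H _]. eapply dpl_val; [|exact H]. unfold dot, cx, cy, cz; simpl; ring. Qed.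
Lemma hasD_cy : hasD cy (fun _ => (0,1,0)).
Proof. intros g t L [_ [H _]]. eapply dpl_val; [|exact H]. unfold dot, cx, cy, cz; simpl; ring. Qed.
Lemma hasD_cz : hasD cz (fun _ => (0,0,1)).
Proof. intros g t L [_ [_ H]]. eapply dpl_val; [|exact H]. unfold dot, cx, cy, cz; simpl; ring. Qed.

Lemma hasD_plus f g F G : hasD f F -> hasD g G -> hasD (fun p => f p + g p) (fun p => vadd (F p) (G p)).
Proof. intros Hf Hg c t L HL. eapply dpl_val; [|apply (derivable_pt_lim_plus _ _ _ _ _ (Hf c t L HL) (Hg c t L HL))].
  unfold dot, vadd, cx, cy, cz; simpl; ring. Qed.

Lemma hasD_minus f g F G : hasD f F -> hasD g G -> hasD (fun p => f p - g p) (fun p => vadd (F p) (vscale (-1) (G p))).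
Proof. intros Hf Hg c t L HL. eapply dpl_val; [|apply (derivable_pt_lim_minus _ _ _ _ _ (Hf c t L HL) (Hg c t L HL))].
  unfold dot, vadd, vscale, cx, cy, cz; simpl; ring. Qed.

Lemma hasD_mult f g F G : hasD f F -> hasD g G ->
  hasD (fun p => f p * g p) (fun p => vadd (vscale (g p) (F p)) (vscale (f p) (G p))).
Proof. intros Hf Hg c t L HL. eapply dpl_val; [|apply (derivable_pt_lim_mult _ _ _ _ _ (Hf c t L HL) (Hg c t L HL))].
  unfold dot, vadd, vscale, cx, cy, cz; simpl; ring. Qed.

Lemma Good_ext f g : (forall p, f p = g p) -> Good f -> Good g.
Proof. intros E [G [H1 [H2 H3]]]; exists G; split; [eapply hasD_ext; eauto|split; [eapply seqc_ext; eauto|auto]]. Qed.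

Lemma Good_const a : Good (fun _ => a).
Proof. exists (fun _ => v0); repeat split; try apply hasD_const; try apply seqc_const. Qed.
Lemma Good_cx : Good cx.
Proof. exists (fun _ => (1,0,0)); repeat split; try apply hasD_cx; try apply seqc_cx; apply seqc_const. Qed.
Lemma Good_cy : Good cy.
Proof. exists (fun _ => (0,1,0)); repeat split; try apply hasD_cy; try apply seqc_cy; apply seqc_const. Qed.
Lemma Good_cz : Good cz.
Proof. exists (fun _ => (0,0,1)); repeat split; try apply hasD_cz; try apply seqc_cz; apply seqc_const. Qed.

Lemma Good_plus f g : Good f -> Good g -> Good (fun p => f p + g p).
Proof. intros [F [A1 [A2 [A3 [A4 A5]]]]] [G [B1 [B2 [B3 [B4 B5]]]]].
  exists (fun p => vadd (F p) (G p)); repeat split.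
  apply hasD_plus; auto. apply seqc_plus; auto.
  all: unfold vadd, cx, cy, cz; simpl; apply seqc_plus; auto. Qed.

Lemma Good_minus f g : Good f -> Good g -> Good (fun p => f p - g p).
Proof. intros [F [A1 [A2 [A3 [A4 A5]]]]] [G [B1 [B2 [B3 [B4 B5]]]]].
  exists (fun p => vadd (F p) (vscale (-1) (G p))); repeat split.
  apply hasD_minus; auto. apply seqc_minus; auto.
  all: unfold vadd, vscale, cx, cy, cz; simpl; apply seqc_plus; auto; apply seqc_mult; auto; apply seqc_const. Qed.

Lemma Good_mult f g : Good f -> Good g -> Good (fun p => f p * g p).
Proof. intros [F [A1 [A2 [A3 [A4 A5]]]]] [G [B1 [B2 [B3 [B4 B5]]]]].
  exists (fun p => vadd (vscale (g p) (F p)) (vscale (f p) (G p))); repeat split.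
  apply hasD_mult; auto. apply seqc_mult; auto.
  all: unfold vadd, vscale, cx, cy, cz; simpl; apply seqc_plus; apply seqc_mult; auto. Qed.

Lemma Good_pow f n : Good f -> Good (fun p => f p ^ n).
Proof. intros Hf; induction n.
  - apply (Good_ext (fun _ => 1)); [intros; simpl; ring| apply Good_const].
  - apply (Good_ext (fun p => f p * f p ^ n)); [intros; simpl; ring| apply Good_mult; auto]. Qed.

Lemma Good_sum (F : nat -> R3 -> R) : (forall i, Good (F i)) -> forall n, Good (fun p => sum_f_R0 (fun i => F i p) n).
Proof. intros H n; induction n; simpl; auto. apply (Good_plus (fun p => sum_f_R0 (fun i => F i p) n) (F (S n))); auto. Qed.

Lemma Good_hom m (c : Poly2) : Good (fun q => hom_eval m c (cx q) (cy q) (cz q)).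
Proof. unfold hom_eval. apply (Good_sum (fun i q => sum_f_R0 (fun j => c i j * cx q ^ i * cy q ^ j * cz q ^ (m - i - j)) (m - i))).
  intro i. apply (Good_sum (fun j q => c i j * cx q ^ i * cy q ^ j * cz q ^ (m - i - j))).
  intro j. repeat apply Good_mult; try apply Good_pow; try apply Good_const; try apply Good_cx; try apply Good_cy; try apply Good_cz. Qed.

Lemma Good_opp f : Good f -> Good (fun p => - f p).
Proof. intros H. apply (Good_ext (fun p => 0 - f p)); [intros; ring|]. apply Good_minus; auto; apply Good_const. Qed.

Ltac good := repeat first [ assumption | apply Good_const | apply Good_cx | apply Good_cy | apply Good_cz
   | apply Good_pow | apply Good_minus | apply Good_plus | apply Good_mult | apply Good_opp ].

Lemma Good_poinc m X :
  Good (fun q => cx (poinc m X q)) /\ Good (fun q => cy (poinc m X q)) /\ Good (fun q => cz (poinc m X q)).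
Proof.
  pose proof (Good_hom m (pP X)) as HP. pose proof (Good_hom m (pQ X)) as HQ.
  set (P := fun q => hom_eval m (pP X) (cx q) (cy q) (cz q)) in HP.
  set (Q := fun q => hom_eval m (pQ X) (cx q) (cy q) (cz q)) in HQ.
  repeat split.
  - apply (Good_ext (fun q => (1 - cx q ^ 2) * P q - cx q * cy q * Q q)); [reflexivity|]. good.
  - apply (Good_ext (fun q => (0 - cx q) * cy q * P q + (1 - cy q ^ 2) * Q q)); [intros q; unfold poinc; cbv zeta; rewrite cy_mk; unfold P, Q; ring|]. good.
  - apply (Good_ext (fun q => (0 - cz q) * (cx q * P q + cy q * Q q))); [intros q; unfold poinc; cbv zeta; rewrite cz_mk; unfold P, Q; ring|]. good.
Qed.


Lemma phi_der phi d : (forall x, d O x = phi x) -> (forall n x, derivable_pt_lim (d n) x (d (S n) x)) ->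
  forall t, derivable_pt_lim phi t (d 1%nat t).
Proof. intros H0 H t. replace phi with (d O). apply H. apply functional_extensionality; auto. Qed.

Lemma d_cont d n : (forall n x, derivable_pt_lim (d n) x (d (S n) x)) -> forall t, continuity_pt (d n) t.
Proof. intros H t. apply derivable_continuous_pt. exists (d (S n) t). apply H. Qed.

Lemma phi_cont phi d : (forall x, d O x = phi x) -> (forall n x, derivable_pt_lim (d n) x (d (S n) x)) ->
  forall t, continuity_pt phi t.
Proof. intros H0 H t. apply derivable_continuous_pt. exists (d 1%nat t). apply (phi_der phi d); auto. Qed.

Lemma der_zero_right f t l : derivable_pt_lim f t l -> (forall h, 0 < h -> f (t + h) = f t) -> l = 0.
Proof. intros Hd Hc. destruct (Req_dec l 0) as [|Hl]; auto. exfalso.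
  destruct (Hd (Rabs l) (Rabs_pos_lt _ Hl)) as [del Hdel].
  assert (Hp : 0 < del / 2) by (destruct del; simpl; lra).
  specialize (Hdel (del/2) ltac:(lra)). rewrite Rabs_pos_eq in Hdel by lra.
  specialize (Hdel ltac:(destruct del; simpl in *; lra)). rewrite Hc in Hdel by auto.
  replace ((f t - f t) / (del / 2) - l) with (- l) in Hdel by (field; lra).
  rewrite Rabs_Ropp in Hdel; lra. Qed.

Lemma der_zero_left f t l : derivable_pt_lim f t l -> (forall h, h < 0 -> f (t + h) = f t) -> l = 0.
Proof. intros Hd Hc. destruct (Req_dec l 0) as [|Hl]; auto. exfalso.
  destruct (Hd (Rabs l) (Rabs_pos_lt _ Hl)) as [del Hdel].
  assert (Hp : 0 < del / 2) by (destruct del; simpl; lra).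
  specialize (Hdel (- (del/2)) ltac:(lra)). rewrite Rabs_Ropp, Rabs_pos_eq in Hdel by lra.
  specialize (Hdel ltac:(destruct del; simpl in *; lra)). rewrite Hc in Hdel by lra.
  replace ((f t - f t) / - (del / 2) - l) with (- l) in Hdel by (field; lra).
  rewrite Rabs_Ropp in Hdel; lra. Qed.

Section PhiFacts.
End PhiFacts.

Lemma phi_facts phi : transition_fun phi ->
  exists d1 : R -> R,
    (forall t, derivable_pt_lim phi t (d1 t)) /\
    (forall t, continuity_pt phi t) /\ (forall t, continuity_pt d1 t) /\
    (forall t, -1 < t < 1 -> 0 < d1 t) /\
    (forall t, 1 <= t -> d1 t = 0) /\ (forall t, t <= -1 -> d1 t = 0) /\
    (forall t, 1 <= t -> phi t = 1) /\ (forall t, t <= -1 -> phi t = 0) /\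
    (forall t, -1 <= t <= 1 -> 0 <= phi t <= 1).
Proof.
  intros [[d [H0 H]] [Hl [Hr Hpos]]].
  pose proof (phi_der phi d H0 H) as Hder.
  exists (d 1%nat). split; [auto|]. split; [apply (phi_cont phi d); auto|].
  split; [intro; apply d_cont; auto|].
  assert (Hp : forall t, -1 < t < 1 -> 0 < d 1%nat t).
  { intros t Ht. destruct (Hpos t Ht) as [l [Hl1 Hl2]]. rewrite (uniqueness_limite phi t (d 1%nat t) l); auto. }
  split; [auto|]. split.
  { intros t Ht. apply (der_zero_right phi t); auto. intros h Hh; rewrite !Hr; lra. }
  split.
  { intros t Ht. apply (der_zero_left phi t); auto. intros h Hh; rewrite !Hl; lra. }
  split; [auto|]. split; [auto|].
  intros t Ht. split.
  - destruct (Req_dec t (-1)) as [->|Hne]; [rewrite Hl; lra|].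
    destruct (MVT_cor2 phi (d 1%nat) (-1) t ltac:(lra) ltac:(intros; auto)) as [c [Hc1 Hc2]].
    assert (0 < d 1%nat c) by (apply Hp; lra). rewrite (Hl (-1)) in Hc1 by lra. nra.
  - destruct (Req_dec t 1) as [->|Hne]; [rewrite Hr; lra|].
    destruct (MVT_cor2 phi (d 1%nat) t 1 ltac:(lra) ltac:(intros; auto)) as [c [Hc1 Hc2]].
    assert (0 < d 1%nat c) by (apply Hp; lra). rewrite (Hr 1) in Hc1 by lra. nra.
Qed.

Lemma cx_vadd p q : cx (vadd p q) = cx p + cx q. Proof. reflexivity. Qed.
Lemma cy_vadd p q : cy (vadd p q) = cy p + cy q. Proof. reflexivity. Qed.
Lemma cz_vadd p q : cz (vadd p q) = cz p + cz q. Proof. reflexivity. Qed.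
Lemma cx_vscale a q : cx (vscale a q) = a * cx q. Proof. reflexivity. Qed.
Lemma cy_vscale a q : cy (vscale a q) = a * cy q. Proof. reflexivity. Qed.
Lemma cz_vscale a q : cz (vscale a q) = a * cz q. Proof. reflexivity. Qed.
Definition ta (q : R3) : R3 := (- cz q, 0, cx q).
Definition tb (q : R3) : R3 := (cx q * cy q, - (cx q ^ 2 + cz q ^ 2), cy q * cz q).
Definition islin (M : R3 -> R3) : Prop :=
  forall al be a b, M (vadd (vscale al a) (vscale be b)) = vadd (vscale al (M a)) (vscale be (M b)).
Definition mm11 M q := det3 q (M (ta q)) (tb q).
Definition mm21 M q := det3 q (ta q) (M (ta q)).
Definition mm12 M q := det3 q (M (tb q)) (tb q).
Definition mm22 M q := det3 q (ta q) (M (tb q)).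

Lemma det3_lin2 q r s b al be : det3 q (vadd (vscale al r) (vscale be s)) b = al * det3 q r b + be * det3 q s b.
Proof. unfold det3, vadd, vscale, cx, cy, cz; simpl; ring. Qed.
Lemma det3_lin3 q a r s al be : det3 q a (vadd (vscale al r) (vscale be s)) = al * det3 q a r + be * det3 q a s.
Proof. unfold det3, vadd, vscale, cx, cy, cz; simpl; ring. Qed.
Lemma det3_scale2 q r b al : det3 q (vscale al r) b = al * det3 q r b.
Proof. unfold det3, vadd, vscale, cx, cy, cz; simpl; ring. Qed.
Lemma det3_scale3 q a r al : det3 q a (vscale al r) = al * det3 q a r.
Proof. unfold det3, vadd, vscale, cx, cy, cz; simpl; ring. Qed.

Lemma Delta_val q : det3 q (ta q) (tb q) = (cx q ^ 2 + cz q ^ 2) * (cx q ^ 2 + cy q ^ 2 + cz q ^ 2).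
Proof. unfold det3, ta, tb, cx, cy, cz; simpl; ring. Qed.

Lemma decomp q w : sphere q -> cy q ^ 2 < 1 -> tangent q w ->
  w = vadd (vscale (det3 q w (tb q) / det3 q (ta q) (tb q)) (ta q))
           (vscale (det3 q (ta q) w / det3 q (ta q) (tb q)) (tb q)).
Proof. unfold sphere, tangent; intros Hs Hy Ht. rewrite Delta_val, Hs.
  assert (Hd : cx q ^ 2 + cz q ^ 2 <> 0) by lra.
  set (X := det3 q w (tb q)). set (Y := det3 q (ta q) w). set (D := cx q ^ 2 + cz q ^ 2) in *.
  assert (K1 : D * cx w = X * cx (ta q) + Y * cx (tb q)).
  { transitivity (D * ((cx q ^ 2 + cy q ^ 2 + cz q ^ 2) * cx w - dot q w * cx q)).
    rewrite Hs, Ht; ring. unfold D, X, Y, dot, det3, ta, tb, cx, cy, cz; simpl; ring. }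
  assert (K2 : D * cy w = X * cy (ta q) + Y * cy (tb q)).
  { transitivity (D * ((cx q ^ 2 + cy q ^ 2 + cz q ^ 2) * cy w - dot q w * cy q)).
    rewrite Hs, Ht; ring. unfold D, X, Y, dot, det3, ta, tb, cx, cy, cz; simpl; ring. }
  assert (K3 : D * cz w = X * cz (ta q) + Y * cz (tb q)).
  { transitivity (D * ((cx q ^ 2 + cy q ^ 2 + cz q ^ 2) * cz w - dot q w * cz q)).
    rewrite Hs, Ht; ring. unfold D, X, Y, dot, det3, ta, tb, cx, cy, cz; simpl; ring. }
  clearbody D X Y.
  apply R3_eq; rewrite ?cx_vadd, ?cy_vadd, ?cz_vadd, ?cx_vscale, ?cy_vscale, ?cz_vscale;
  apply (Rmult_eq_reg_l D); auto.
  rewrite K1; field; auto. rewrite K2; field; auto. rewrite K3; field; auto.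
Qed.


Lemma alg22 m11 m12 m21 m22 U1 U2 V1 V2 B :
  m11*U1 + m12*U2 + B*V1 = 0 -> m21*U1 + m22*U2 + B*V2 = 0 ->
  m11*V1 + m12*V2 - B*U1 = 0 -> m21*V1 + m22*V2 - B*U2 = 0 ->
  ~ (U1 = 0 /\ U2 = 0 /\ V1 = 0 /\ V2 = 0) ->
  m11*m22 - m12*m21 = 0 \/ m11 + m22 = 0.
Proof. intros e1 e2 e3 e4 Hn.
  set (P := m11*m22 - m12*m21 - B^2). set (Q := B*(m11+m22)).
  assert (a1 : P*U1 + Q*V1 = 0).
  { transitivity (m22*(m11*U1 + m12*U2 + B*V1) - m12*(m21*U1 + m22*U2 + B*V2) + B*(m11*V1 + m12*V2 - B*U1)).
    unfold P, Q; ring. rewrite e1, e2, e3; ring. }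
  assert (a2 : P*U2 + Q*V2 = 0).
  { transitivity (- m21*(m11*U1 + m12*U2 + B*V1) + m11*(m21*U1 + m22*U2 + B*V2) + B*(m21*V1 + m22*V2 - B*U2)).
    unfold P, Q; ring. rewrite e1, e2, e4; ring. }
  assert (a3 : P*V1 - Q*U1 = 0).
  { transitivity (m22*(m11*V1 + m12*V2 - B*U1) - m12*(m21*V1 + m22*V2 - B*U2) - B*(m11*U1 + m12*U2 + B*V1)).
    unfold P, Q; ring. rewrite e1, e3, e4; ring. }
  assert (a4 : P*V2 - Q*U2 = 0).
  { transitivity (- m21*(m11*V1 + m12*V2 - B*U1) + m11*(m21*V1 + m22*V2 - B*U2) - B*(m21*U1 + m22*U2 + B*V2)).
    unfold P, Q; ring. rewrite e2, e3, e4; ring. }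
  assert (HPQ : P = 0 /\ Q = 0).
  { destruct (Req_dec (P^2+Q^2) 0) as [H0|H0].
    - split; nra.
    - exfalso; apply Hn.
      assert (b1 : (P^2+Q^2)*U1 = 0) by (transitivity (P*(P*U1+Q*V1) - Q*(P*V1 - Q*U1)); [ring| rewrite a1, a3; ring]).
      assert (b2 : (P^2+Q^2)*U2 = 0) by (transitivity (P*(P*U2+Q*V2) - Q*(P*V2 - Q*U2)); [ring| rewrite a2, a4; ring]).
      assert (b3 : (P^2+Q^2)*V1 = 0) by (transitivity (Q*(P*U1+Q*V1) + P*(P*V1 - Q*U1)); [ring| rewrite a1, a3; ring]).
      assert (b4 : (P^2+Q^2)*V2 = 0) by (transitivity (Q*(P*U2+Q*V2) + P*(P*V2 - Q*U2)); [ring| rewrite a2, a4; ring]).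
      repeat split.
      apply (Rmult_eq_reg_l (P^2+Q^2)); [rewrite b1; ring|auto].
      apply (Rmult_eq_reg_l (P^2+Q^2)); [rewrite b2; ring|auto].
      apply (Rmult_eq_reg_l (P^2+Q^2)); [rewrite b3; ring|auto].
      apply (Rmult_eq_reg_l (P^2+Q^2)); [rewrite b4; ring|auto]. }
  destruct HPQ as [HP HQ]. unfold P, Q in *.
  destruct (Req_dec B 0) as [->|HB].
  - left; nra.
  - right. apply (Rmult_eq_reg_l B); auto. rewrite Rmult_0_r; auto.
Qed.

Lemma linalg M q be u v : islin M -> sphere q -> cy q ^ 2 < 1 -> tangent q u -> tangent q v ->
  M u = vscale (- be) v -> M v = vscale be u -> ~ (u = v0 /\ v = v0) ->
  mm11 M q * mm22 M q - mm12 M q * mm21 M q = 0 \/ mm11 M q + mm22 M q = 0.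
Proof. intros Hl Hs Hy Htu Htv Hu Hv Hn.
  set (D := det3 q (ta q) (tb q)).
  assert (HD : D <> 0). { unfold D; rewrite Delta_val. unfold sphere in Hs; rewrite Hs. nra. }
  pose proof (decomp q u Hs Hy Htu) as Du. pose proof (decomp q v Hs Hy Htv) as Dv. fold D in Du, Dv.
  set (U1 := det3 q u (tb q)) in *. set (U2 := det3 q (ta q) u) in *.
  set (V1 := det3 q v (tb q)) in *. set (V2 := det3 q (ta q) v) in *.
  assert (MU : M u = vadd (vscale (U1/D) (M (ta q))) (vscale (U2/D) (M (tb q)))) by (rewrite Du at 1; apply Hl).
  assert (MV : M v = vadd (vscale (V1/D) (M (ta q))) (vscale (V2/D) (M (tb q)))) by (rewrite Dv at 1; apply Hl).
  apply (alg22 _ _ _ _ U1 U2 V1 V2 (be * D)).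
  - assert (E := f_equal (fun w => det3 q w (tb q)) MU). simpl in E.
    rewrite det3_lin2, Hu, det3_scale2 in E. fold V1 in E. unfold mm11, mm12.
    apply (Rmult_eq_reg_l (/D)); [|apply Rinv_neq_0_compat; auto].
    transitivity (U1 / D * det3 q (M (ta q)) (tb q) + U2 / D * det3 q (M (tb q)) (tb q) - (- be * V1)); [field; auto|].
    rewrite <- E; ring.
  - assert (E := f_equal (fun w => det3 q (ta q) w) MU). simpl in E.
    rewrite det3_lin3, Hu, det3_scale3 in E. fold V2 in E. unfold mm21, mm22.
    apply (Rmult_eq_reg_l (/D)); [|apply Rinv_neq_0_compat; auto].
    transitivity (U1 / D * det3 q (ta q) (M (ta q)) + U2 / D * det3 q (ta q) (M (tb q)) - (- be * V2)); [field; auto|].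
    rewrite <- E; ring.
  - assert (E := f_equal (fun w => det3 q w (tb q)) MV). simpl in E.
    rewrite det3_lin2, Hv, det3_scale2 in E. fold U1 in E. unfold mm11, mm12.
    apply (Rmult_eq_reg_l (/D)); [|apply Rinv_neq_0_compat; auto].
    transitivity (V1 / D * det3 q (M (ta q)) (tb q) + V2 / D * det3 q (M (tb q)) (tb q) - (be * U1)); [field; auto|].
    rewrite <- E; ring.
  - assert (E := f_equal (fun w => det3 q (ta q) w) MV). simpl in E.
    rewrite det3_lin3, Hv, det3_scale3 in E. fold U2 in E. unfold mm21, mm22.
    apply (Rmult_eq_reg_l (/D)); [|apply Rinv_neq_0_compat; auto].
    transitivity (V1 / D * det3 q (ta q) (M (ta q)) + V2 / D * det3 q (ta q) (M (tb q)) - (be * U2)); [field; auto|].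
    rewrite <- E; ring.
  - intros [h1 [h2 [h3 h4]]]. apply Hn. rewrite Du, Dv, h1, h2, h3, h4.
    split; apply R3_eq; unfold v0, vadd, vscale, cx, cy, cz; simpl; field; auto.
Qed.


Record Fld := mkFld { FF : VF3; Gx : R3 -> R3; Gy : R3 -> R3; Gz : R3 -> R3 }.
Definition GoodF (U : Fld) : Prop :=
  GoodD (fun q => cx (FF U q)) (Gx U) /\ GoodD (fun q => cy (FF U q)) (Gy U) /\ GoodD (fun q => cz (FF U q)) (Gz U).
Definition DF (U : Fld) (q w : R3) : R3 := (dot (Gx U q) w, dot (Gy U q) w, dot (Gz U q) w).

Lemma GoodF_poinc m X : exists U, FF U = poinc m X /\ GoodF U.
Proof. destruct (Good_poinc m X) as [[G1 H1] [[G2 H2] [G3 H3]]].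
  exists (mkFld (poinc m X) G1 G2 G3). split; [reflexivity|]. split; [|split]; simpl; auto. Qed.

Lemma dlin a b t : derivable_pt_lim (fun s => a + s * b) t b.
Proof. pose proof (derivable_pt_lim_plus _ _ t _ _ (derivable_pt_lim_const a t)
   (derivable_pt_lim_scal id b t _ (derivable_pt_lim_id t))) as H.
  eapply dpl_val; [|eapply dpl_ext; [|exact H]]. ring. intros; unfold plus_fct, fct_cte, mult_real_fct, id; ring. Qed.

Lemma line_deriv q u : curve_deriv (fun s => vadd q (vscale s u)) 0 u.
Proof. unfold curve_deriv; repeat split.
  - apply (dpl_ext (fun s => cx q + s * cx u)); [intros; reflexivity|apply dlin].
  - apply (dpl_ext (fun s => cy q + s * cy u)); [intros; reflexivity|apply dlin].
  - apply (dpl_ext (fun s => cz q + s * cz u)); [intros; reflexivity|apply dlin].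
Qed.

Lemma line0 q u : vadd q (vscale 0 u) = q.
Proof. apply R3_eq; rewrite ?cx_vadd, ?cy_vadd, ?cz_vadd, ?cx_vscale, ?cy_vscale, ?cz_vscale; ring. Qed.

Lemma hasD_dderiv_s f G q u : hasD f G -> dderiv_s f q u (dot (G q) u).
Proof. intros H. unfold dderiv_s. pose proof (H _ 0 u (line_deriv q u)) as H1. cbv beta in H1. rewrite line0 in H1. exact H1. Qed.

Lemma hasD_dderiv_s_eq f G q u l : hasD f G -> dderiv_s f q u l -> l = dot (G q) u.
Proof. intros H Hl. eapply uniqueness_limite; [exact Hl| apply hasD_dderiv_s; auto]. Qed.

Lemma GoodF_dderiv U q u : GoodF U -> dderiv (FF U) q u (DF U q u).
Proof. intros [[H1 _] [[H2 _] [H3 _]]]. unfold dderiv, DF; rewrite cx_mk, cy_mk, cz_mk.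
  repeat split; apply hasD_dderiv_s; auto. Qed.

Lemma GoodF_dderiv_eq U q u L : GoodF U -> dderiv (FF U) q u L -> L = DF U q u.
Proof. intros [[H1 _] [[H2 _] [H3 _]]] [E1 [E2 E3]]. unfold DF; apply R3_eq; rewrite ?cx_mk, ?cy_mk, ?cz_mk;
  eapply hasD_dderiv_s_eq; eauto. Qed.

Definition blend (U V : VF3) (Phi : R3 -> R) : VF3 := fun q =>
  vadd (vscale (1 - Phi q) (V q)) (vscale (Phi q) (U q)).

Lemma reg_blend m X Y phi eps : regularization m X Y phi eps = blend (poinc m X) (poinc m Y) (fun q => phi (cy q / eps)).
Proof. reflexivity. Qed.

Definition Mreg (U V : Fld) (phi d1 : R -> R) (eps : R) (q w : R3) : R3 :=
  vadd (vadd (vscale (1 - phi (cy q / eps)) (DF V q w)) (vscale (phi (cy q / eps)) (DF U q w)))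
       (vscale (d1 (cy q / eps) / eps * cy w) (vadd (FF U q) (vscale (-1) (FF V q)))).

Lemma Mreg_lin U V phi d1 eps q : islin (Mreg U V phi d1 eps q).
Proof. intros al be a b. apply R3_eq; unfold Mreg, DF, dot, vadd, vscale, cx, cy, cz; simpl; ring. Qed.

Lemma hasD_Phi phi d1 eps : eps <> 0 -> (forall t, derivable_pt_lim phi t (d1 t)) ->
  hasD (fun q => phi (cy q / eps)) (fun q => (0, d1 (cy q / eps) / eps, 0)).
Proof. intros He Hd g t L [_ [Hy _]].
  assert (H1 : derivable_pt_lim (fun s => cy (g s) / eps) t (cy L / eps)).
  { pose proof (derivable_pt_lim_scal _ (/eps) t _ Hy) as H. eapply dpl_val; [|eapply dpl_ext; [|exact H]].
    unfold Rdiv; ring. intros; unfold mult_real_fct, Rdiv; ring. }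
  pose proof (derivable_pt_lim_comp _ phi t _ _ H1 (Hd _)) as H2.
  eapply dpl_val; [|eapply dpl_ext; [|exact H2]]. unfold dot; rewrite cx_mk, cy_mk, cz_mk. field; auto.
  intros; reflexivity. Qed.

Lemma hasD_gext f G G' : (forall p w, dot (G p) w = dot (G' p) w) -> hasD f G -> hasD f G'.
Proof. intros E H g t L HL. rewrite <- E. auto. Qed.

Lemma hasD_blend1 (u v Phi : R3 -> R) Gu Gv GP : hasD u Gu -> hasD v Gv -> hasD Phi GP ->
  hasD (fun q => (1 - Phi q) * v q + Phi q * u q)
       (fun q => vadd (vadd (vscale (1 - Phi q) (Gv q)) (vscale (Phi q) (Gu q))) (vscale (u q - v q) (GP q))).
Proof. intros Hu Hv HP.
  pose proof (hasD_plus _ _ _ _ (hasD_mult _ _ _ _ (hasD_minus _ _ _ _ (hasD_const 1) HP) Hv) (hasD_mult _ _ _ _ HP Hu)) as H.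
  eapply hasD_gext; [|exact H]. intros p w. unfold dot, vadd, vscale, v0, cx, cy, cz; simpl; ring. Qed.

Lemma dderiv_blend U V phi d1 eps q u L : GoodF U -> GoodF V -> eps <> 0 -> (forall t, derivable_pt_lim phi t (d1 t)) ->
  dderiv (blend (FF U) (FF V) (fun q => phi (cy q / eps))) q u L -> L = Mreg U V phi d1 eps q u.
Proof. intros [[HU1 _] [[HU2 _] [HU3 _]]] [[HV1 _] [[HV2 _] [HV3 _]]] He Hd [E1 [E2 E3]].
  pose proof (hasD_Phi phi d1 eps He Hd) as HP.
  pose proof (hasD_blend1 _ _ _ _ _ _ HU1 HV1 HP) as B1.
  pose proof (hasD_blend1 _ _ _ _ _ _ HU2 HV2 HP) as B2.
  pose proof (hasD_blend1 _ _ _ _ _ _ HU3 HV3 HP) as B3.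
  apply R3_eq.
  - rewrite (hasD_dderiv_s_eq _ _ _ _ _ B1 E1). unfold Mreg, DF, dot, vadd, vscale, cx, cy, cz; simpl; field; auto.
  - rewrite (hasD_dderiv_s_eq _ _ _ _ _ B2 E2). unfold Mreg, DF, dot, vadd, vscale, cx, cy, cz; simpl; field; auto.
  - rewrite (hasD_dderiv_s_eq _ _ _ _ _ B3 E3). unfold Mreg, DF, dot, vadd, vscale, cx, cy, cz; simpl; field; auto.
Qed.


Ltac cvt := repeat first [ assumption | apply CV_minus | apply CV_plus | apply CV_mult | apply cv_opp | apply cv_const ].

Lemma cv_dot an a bn b : cv3 an a -> cv3 bn b -> Un_cv (fun n => dot (an n) (bn n)) (dot a b).
Proof. intros [A1 [A2 A3]] [B1 [B2 B3]]. unfold dot. cvt. Qed.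

Lemma cv_det3 an a bn b cn c : cv3 an a -> cv3 bn b -> cv3 cn c -> Un_cv (fun n => det3 (an n) (bn n) (cn n)) (det3 a b c).
Proof. intros [A1 [A2 A3]] [B1 [B2 B3]] [C1 [C2 C3]]. unfold det3. cvt. Qed.

Lemma cv3_vadd an a bn b : cv3 an a -> cv3 bn b -> cv3 (fun n => vadd (an n) (bn n)) (vadd a b).
Proof. intros [A1 [A2 A3]] [B1 [B2 B3]]. unfold cv3, vadd; rewrite ?cx_mk, ?cy_mk, ?cz_mk; repeat split; simpl; cvt. Qed.

Lemma cv3_vscale sn s an a : Un_cv sn s -> cv3 an a -> cv3 (fun n => vscale (sn n) (an n)) (vscale s a).
Proof. intros S [A1 [A2 A3]]. unfold cv3, vscale; repeat split; simpl; cvt. Qed.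

Lemma cv3_const a : cv3 (fun _ => a) a.
Proof. repeat split; apply cv_const. Qed.

Lemma cv3_ta qn p : cv3 qn p -> cv3 (fun n => ta (qn n)) (ta p).
Proof. intros [A1 [A2 A3]]. unfold cv3, ta, cx, cy, cz in *; repeat split; simpl; cvt. Qed.

Lemma cv3_tb qn p : cv3 qn p -> cv3 (fun n => tb (qn n)) (tb p).
Proof. intros [A1 [A2 A3]]. unfold cv3, tb, cx, cy, cz in *; repeat split; simpl; cvt. Qed.

Lemma cv3_F U qn p : GoodF U -> cv3 qn p -> cv3 (fun n => FF U (qn n)) (FF U p).
Proof. intros [[_ [H1 _]] [[_ [H2 _]] [_ [H3 _]]]] Hc. repeat split; [apply H1|apply H2|apply H3]; auto. Qed.

Lemma cv3_G (G : R3 -> R3) qn p : seqc (fun p => cx (G p)) -> seqc (fun p => cy (G p)) -> seqc (fun p => cz (G p)) ->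
  cv3 qn p -> cv3 (fun n => G (qn n)) (G p).
Proof. intros H1 H2 H3 Hc. repeat split; [apply H1|apply H2|apply H3]; auto. Qed.

Lemma cv3_DF U qn p wn w : GoodF U -> cv3 qn p -> cv3 wn w -> cv3 (fun n => DF U (qn n) (wn n)) (DF U p w).
Proof. intros [[_ [_ [a1 [a2 a3]]]] [[_ [_ [b1 [b2 b3]]]] [_ [_ [c1 [c2 c3]]]]]] Hq Hw.
  unfold DF, cv3; rewrite ?cx_mk, ?cy_mk, ?cz_mk; repeat split; simpl; apply cv_dot; auto; apply cv3_G; auto. Qed.

Lemma U2f_zero W p l : W p = v0 -> U2f W p l -> l = 0.
Proof. intros Hw H. unfold U2f, dderiv_s in H. rewrite Hw in H.
  assert (H' : derivable_pt_lim (fct_cte (cy (W p))) 0 l).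
  { eapply dpl_ext; [|exact H]. intros y. unfold fct_cte. f_equal. f_equal. apply R3_eq; unfold vadd, vscale, v0, cx, cy, cz; simpl; ring. }
  eapply uniqueness_limite; [exact H'|apply derivable_pt_lim_const]. Qed.

Lemma UV_nonzero U V p : D_sing_elementary U V -> inD p -> U p <> v0 /\ V p <> v0.
Proof. intros HD Hp. split; intro Hz.
  - assert (Hu : Uf U p = 0) by (unfold Uf; rewrite Hz; reflexivity).
    destruct (HD p Hp) as [[_ [[_ [_ [l [Hl1 Hl2]]]]|[Hne _]]]|[_ [Hneg _]]].
    + unfold D_regular; rewrite Hu; intros [H|[H _]]; lra.
    + apply Hl2; eapply U2f_zero; eauto.
    + auto.
    + rewrite Hu in Hneg; lra.
  - assert (Hv : Uf V p = 0) by (unfold Uf; rewrite Hz; reflexivity).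
    destruct (HD p Hp) as [[_ [[Hne _]|[_ [_ [l [Hl1 Hl2]]]]]]|[_ [Hneg _]]].
    + unfold D_regular; rewrite Hv; intros [H|[H _]]; lra.
    + auto.
    + apply Hl2; eapply U2f_zero; eauto.
    + rewrite Hv in Hneg; lra.
Qed.

Lemma dpl_plus f g x l1 l2 : derivable_pt_lim f x l1 -> derivable_pt_lim g x l2 -> derivable_pt_lim (fun s => f s + g s) x (l1 + l2).
Proof. intros; apply (derivable_pt_lim_plus f g); auto. Qed.
Lemma dpl_minus f g x l1 l2 : derivable_pt_lim f x l1 -> derivable_pt_lim g x l2 -> derivable_pt_lim (fun s => f s - g s) x (l1 - l2).
Proof. intros; apply (derivable_pt_lim_minus f g); auto. Qed.
Lemma dpl_mult f g x l1 l2 : derivable_pt_lim f x l1 -> derivable_pt_lim g x l2 -> derivable_pt_lim (fun s => f s * g s) x (l1 * g x + f x * l2).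
Proof. intros; apply (derivable_pt_lim_mult f g); auto. Qed.

Lemma det3_curve a a' b b' c c' t : curve_deriv a t a' -> curve_deriv b t b' -> curve_deriv c t c' ->
  derivable_pt_lim (fun s => det3 (a s) (b s) (c s)) t (det3 a' (b t) (c t) + det3 (a t) b' (c t) + det3 (a t) (b t) c').
Proof. intros [a1 [a2 a3]] [b1 [b2 b3]] [c1 [c2 c3]]. unfold det3.
  eapply dpl_val; [| repeat first [apply dpl_minus | apply dpl_plus | apply dpl_mult | eassumption]]. cbv beta; ring. Qed.

Lemma det3_swap23 p a b : det3 p a b = - det3 p b a.
Proof. unfold det3; ring. Qed.
Lemma det3_rep23 p a : det3 p a a = 0.
Proof. unfold det3; ring. Qed.
Lemma plucker q r b a s : det3 q r b * det3 q a s - det3 q s b * det3 q a r = det3 q a b * det3 q r s.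
Proof. unfold det3; ring. Qed.

Lemma curve_F U g t L : GoodF U -> curve_deriv g t L -> curve_deriv (fun s => FF U (g s)) t (DF U (g t) L).
Proof. intros [[H1 _] [[H2 _] [H3 _]]] HL. unfold DF; repeat split; rewrite ?cx_mk, ?cy_mk, ?cz_mk.
  apply (H1 g t L HL). apply (H2 g t L HL). apply (H3 g t L HL). Qed.

Lemma circ_deriv th : curve_deriv (fun s => (cos s, 0, sin s)) th (- sin th, 0, cos th).
Proof. repeat split; rewrite ?cx_mk, ?cy_mk, ?cz_mk.
  - apply (dpl_ext cos); [reflexivity|apply derivable_pt_lim_cos].
  - apply (dpl_ext (fct_cte 0)); [reflexivity|apply derivable_pt_lim_const].
  - apply (dpl_ext sin); [reflexivity|apply derivable_pt_lim_sin]. Qed.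

Lemma key_point U V p s ds : GoodF U -> GoodF V -> D_sing_elementary (FF U) (FF V) -> inD p -> 0 < s < 1 -> 0 < ds ->
  (1 - s) * cx (FF V p) + s * cx (FF U p) = 0 ->
  (1 - s) * cy (FF V p) + s * cy (FF U p) = 0 ->
  (1 - s) * cz (FF V p) + s * cz (FF U p) = 0 ->
  ds * cy (tb p) * det3 p (ta p) (vadd (FF U p) (vscale (-1) (FF V p))) <> 0 /\
  det3 p (vadd (vscale (1 - s) (DF V p (ta p))) (vscale s (DF U p (ta p)))) (tb p) *
     (ds * cy (tb p) * det3 p (ta p) (vadd (FF U p) (vscale (-1) (FF V p)))) -
  (ds * cy (tb p) * det3 p (vadd (FF U p) (vscale (-1) (FF V p))) (tb p)) *
     det3 p (ta p) (vadd (vscale (1 - s) (DF V p (ta p))) (vscale s (DF U p (ta p)))) <> 0.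
Proof.
  intros GU GV HD Hp Hs Hds E1 E2 E3.
  set (u := FF U p) in *.
  set (la := s / (1 - s)).
  assert (Hla : 0 < la) by (unfold la; apply Rdiv_lt_0_compat; lra).
  assert (HV : FF V p = vscale (- la) u).
  { apply R3_eq; rewrite ?cx_vscale, ?cy_vscale, ?cz_vscale; unfold la;
    apply (Rmult_eq_reg_l (1 - s)); try lra; field_simplify; lra. }
  destruct Hp as [Hsph Hy0].
  assert (Huy : cy u <> 0).
  { intro H0. assert (Hv : Uf (FF V) p = 0) by (unfold Uf; rewrite HV, cy_vscale; fold u; rewrite H0; ring).
    assert (Hu : Uf (FF U) p = 0) by (unfold Uf; exact H0).
    destruct (HD p (conj Hsph Hy0)) as [[_ [[Hne _]|[Hne _]]]|[_ [Hneg _]]].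
    - unfold D_regular; rewrite Hu, Hv; intros [H|[H _]]; lra.
    - auto. - auto. - rewrite Hu, Hv in Hneg; lra. }
  assert (Hprod : Uf (FF U) p * Uf (FF V) p < 0).
  { unfold Uf; rewrite HV, cy_vscale; fold u. assert (0 < cy u * cy u) by (apply Rsqr_pos_lt; auto). nra. }
  assert (Hdet : detUV (FF U) (FF V) p = 0).
  { unfold detUV; rewrite HV; fold u. unfold det3, vscale, cx, cy, cz; simpl; ring. }
  assert (HUf : Uf (FF U) p <> 0) by (intro H; rewrite H in Hprod; lra).
  assert (HVf : Uf (FF V) p <> 0) by (intro H; rewrite H in Hprod; lra).
  destruct (HD p (conj Hsph Hy0)) as [[_ [[_ [H _]]|[_ [H _]]]]|[_ [_ [_ [th0 [l [Hpth [Hl Hl0]]]]]]]].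
  - unfold D_regular; intros [H|[_ H]]; [lra|auto].
  - contradiction. - contradiction.
  -
    set (g := fun s => (cos s, 0, sin s)).
    assert (Hg0 : g th0 = p) by (rewrite Hpth; reflexivity).
    assert (Hta : ta p = (- sin th0, 0, cos th0)) by (rewrite Hpth; unfold ta; reflexivity).
    pose proof (det3_curve g _ (fun s => FF U (g s)) _ (fun s => FF V (g s)) _ th0 (circ_deriv th0)
       (curve_F U g th0 _ GU (circ_deriv th0)) (curve_F V g th0 _ GV (circ_deriv th0))) as Hder.
    cbv beta in Hder. rewrite !Hg0, <- Hta in Hder. fold u in Hder.
    assert (Hl' : l = det3 (ta p) u (FF V p) + det3 p (DF U p (ta p)) (FF V p) + det3 p u (DF V p (ta p))).
    { eapply uniqueness_limite; [exact Hl|]. eapply dpl_ext; [|exact Hder]. intros; reflexivity. }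
    set (a1 := det3 p (DF U p (ta p)) u) in *. set (a2 := det3 p (DF V p (ta p)) u).
    assert (F2 : l = - la * a1 - a2).
    { rewrite Hl', HV, !det3_scale3, det3_rep23, (det3_swap23 p u). fold a1 a2. ring. }
    assert (HW : vadd u (vscale (-1) (FF V p)) = vscale (1 + la) u).
    { rewrite HV. apply R3_eq; rewrite ?cx_vadd, ?cy_vadd, ?cz_vadd, ?cx_vscale, ?cy_vscale, ?cz_vscale; ring. }
    rewrite HW.
    assert (Hx2 : cx p ^ 2 + cz p ^ 2 = 1) by (unfold sphere in Hsph; rewrite Hy0 in Hsph; lra).
    assert (Htby : cy (tb p) = -1) by (unfold tb; rewrite cy_mk, Hx2; ring).
    assert (Hdta : forall w, det3 p (ta p) w = - (cx p ^ 2 + cz p ^ 2) * cy w).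
    { intros w. destruct p as [[x y] z]. unfold ta, det3, cx, cy, cz in *; simpl in *; subst y; ring. }
    assert (HDel : det3 p (ta p) (tb p) = 1).
    { rewrite Delta_val. unfold sphere in Hsph; rewrite Hsph, Hx2; ring. }
    split.
    + rewrite Htby, Hdta, Hx2, cy_vscale.
      assert (0 < 1 + la) by lra. intro Hc. apply Huy.
      apply (Rmult_eq_reg_l (ds * (1 + la))); [|apply Rgt_not_eq; nra]. rewrite Rmult_0_r, <- Hc. ring.
    + set (Ag := vadd (vscale (1 - s) (DF V p (ta p))) (vscale s (DF U p (ta p)))).
      replace (det3 p Ag (tb p) * (ds * cy (tb p) * det3 p (ta p) (vscale (1 + la) u)) -
               ds * cy (tb p) * det3 p (vscale (1 + la) u) (tb p) * det3 p (ta p) Ag)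
        with (ds * cy (tb p) * (det3 p Ag (tb p) * det3 p (ta p) (vscale (1 + la) u) -
               det3 p (vscale (1 + la) u) (tb p) * det3 p (ta p) Ag)) by ring.
      rewrite plucker, HDel, Htby, det3_scale3.
      assert (F1 : det3 p Ag u = (1 - s) * a2 + s * a1).
      { unfold Ag; rewrite det3_lin2; fold a1 a2; ring. }
      rewrite F1.
      assert (F3 : (1 - s) * a2 + s * a1 = - (1 - s) * l).
      { rewrite F2; unfold la; field; lra. }
      rewrite F3. intro Hc. apply Hl0.
      assert (0 < 1 + la) by lra.
      apply (Rmult_eq_reg_l (ds * (1 + la) * (1 - s))); [|apply Rgt_not_eq; apply Rmult_lt_0_compat; nra].
      rewrite Rmult_0_r, <- Hc. ring.
Qed.


Fixpoint subs (ch : nat -> nat -> nat) (n : nat) : nat :=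
  match n with O => ch O O | S m => ch (S (subs ch m)) (S m) end.

Lemma inv_small e : 0 < e -> exists N, forall n, (N <= n)%nat -> / (INR n + 1) < e.
Proof. intros He. destruct (archimed_cor1 e He) as [N [HN1 HN2]]. exists N. intros n Hn.
  apply le_INR in Hn. assert (0 < INR N) by (apply lt_0_INR; auto).
  eapply Rle_lt_trans; [|exact HN1]. apply Rinv_le_contravar; lra. Qed.

Lemma BW_sub (u : nat -> R) a b : (forall n, a <= u n <= b) ->
  exists sg l, (forall n, (sg n < sg (S n))%nat) /\ Un_cv (fun n => u (sg n)) l /\ a <= l <= b.
Proof. intros Hu.
  destruct (Bolzano_Weierstrass u _ (compact_P3 a b) Hu) as [l Hl].
  assert (Hch : forall N k, exists p, (N <= p)%nat /\ Rabs (u p - l) < / (INR k + 1)).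
  { intros N k. assert (Hp : 0 < / (INR k + 1)) by (apply Rinv_0_lt_compat; pose proof (pos_INR k); lra).
    apply (Hl (fun y => Rabs (y - l) < / (INR k + 1))). exists (mkposreal _ Hp). unfold included, disc; simpl; auto. }
  set (ch := fun N k => proj1_sig (constructive_indefinite_description _ (Hch N k))).
  assert (Hc : forall N k, (N <= ch N k)%nat /\ Rabs (u (ch N k) - l) < / (INR k + 1)).
  { intros N k. unfold ch. destruct (constructive_indefinite_description _ (Hch N k)); simpl; auto. }
  assert (Hinc : forall n, (subs ch n < subs ch (S n))%nat) by (intros n; simpl; apply Hc).
  assert (Hcl : forall n, Rabs (u (subs ch n) - l) < / (INR n + 1)) by (intros [|n]; simpl; apply Hc).
  assert (Hcv : Un_cv (fun n => u (subs ch n)) l).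
  { intros e He. destruct (inv_small e He) as [N HN]. exists N. intros n Hn. unfold Rdist.
    eapply Rlt_trans; [apply Hcl| apply HN; auto]. }
  exists (subs ch), l. split; [auto|split; [auto|]].
  split.
  - apply (@Rle_cv_lim (fun _ => a) (fun n => u (subs ch n))); auto. intros; apply Hu. apply cv_const.
  - apply (@Rle_cv_lim (fun n => u (subs ch n)) (fun _ => b)); auto. intros; apply Hu. apply cv_const.
Qed.

Lemma sub_ge (sg : nat -> nat) : (forall n, (sg n < sg (S n))%nat) -> forall n, (n <= sg n)%nat.
Proof. intros H n; induction n; [lia|]. specialize (H n); lia. Qed.

Lemma sub_mono (sg : nat -> nat) : (forall n, (sg n < sg (S n))%nat) -> forall n m, (n <= m)%nat -> (sg n <= sg m)%nat.
Proof. intros H n m Hnm; induction Hnm; [lia|]. specialize (H m); lia. Qed.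

Lemma cv_sub u l sg : (forall n, (sg n < sg (S n))%nat) -> Un_cv u l -> Un_cv (fun n => u (sg n)) l.
Proof. intros Hs Hu e He. destruct (Hu e He) as [N HN]. exists N. intros n Hn. apply HN.
  pose proof (sub_ge sg Hs n); lia. Qed.

Lemma sub_comp (s1 s2 : nat -> nat) : (forall n, (s1 n < s1 (S n))%nat) -> (forall n, (s2 n < s2 (S n))%nat) ->
  forall n, (s1 (s2 n) < s1 (s2 (S n)))%nat.
Proof. intros H1 H2 n. specialize (H2 n). pose proof (sub_mono s1 H1 (S (s2 n)) (s2 (S n)) H2). specialize (H1 (s2 n)). lia. Qed.

Lemma choice_nat {A : Type} (P : nat -> A -> Prop) : (forall n, exists x, P n x) -> exists f, forall n, P n (f n).
Proof. intros H. exists (fun n => proj1_sig (constructive_indefinite_description _ (H n))).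
  intros n. destruct (constructive_indefinite_description _ (H n)); simpl; auto. Qed.

Lemma cv_squeeze0 u v : (forall n, Rabs (u n) <= v n) -> Un_cv v 0 -> Un_cv u 0.
Proof. intros H Hv e He. destruct (Hv e He) as [N HN]. exists N. intros n Hn. specialize (HN n Hn).
  unfold Rdist in *. rewrite Rminus_0_r in *. specialize (H n). pose proof (Rabs_pos (u n)).
  rewrite Rabs_right in HN by lra. lra. Qed.

Lemma cv_nonzero_eventually u l : Un_cv u l -> l <> 0 -> exists N, forall n, (N <= n)%nat -> u n <> 0.
Proof. intros Hu Hl. destruct (Hu (Rabs l) (Rabs_pos_lt _ Hl)) as [N HN]. exists N. intros n Hn Hz.
  specialize (HN n Hn). unfold Rdist in HN. rewrite Hz, Rminus_0_l, Rabs_Ropp in HN. lra. Qed.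


Definition Aop (U V : Fld) (phi : R -> R) (eps : R) (q w : R3) : R3 :=
  vadd (vscale (1 - phi (cy q / eps)) (DF V q w)) (vscale (phi (cy q / eps)) (DF U q w)).
Definition Wq (U V : Fld) (q : R3) : R3 := vadd (FF U q) (vscale (-1) (FF V q)).

Lemma det3_as2 q X k Y b : det3 q (vadd X (vscale k Y)) b = det3 q X b + k * det3 q Y b.
Proof. unfold det3, vadd, vscale, cx, cy, cz; simpl; ring. Qed.
Lemma det3_as3 q a X k Y : det3 q a (vadd X (vscale k Y)) = det3 q a X + k * det3 q a Y.
Proof. unfold det3, vadd, vscale, cx, cy, cz; simpl; ring. Qed.

Lemma Mreg_split U V phi d1 eps q w :
  Mreg U V phi d1 eps q w = vadd (Aop U V phi eps q w) (vscale (d1 (cy q / eps) / eps * cy w) (Wq U V q)).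
Proof. reflexivity. Qed.

Lemma expand_tr U V phi d1 eps q : eps <> 0 ->
  eps * (mm11 (Mreg U V phi d1 eps q) q + mm22 (Mreg U V phi d1 eps q) q) =
  eps * det3 q (Aop U V phi eps q (ta q)) (tb q) + eps * det3 q (ta q) (Aop U V phi eps q (tb q))
  + d1 (cy q / eps) * cy (tb q) * det3 q (ta q) (Wq U V q).
Proof. intros He. unfold mm11, mm22. rewrite !Mreg_split, det3_as2, det3_as3.
  replace (cy (ta q)) with 0 by reflexivity. field; auto. Qed.

Lemma expand_det U V phi d1 eps q : eps <> 0 ->
  eps * (mm11 (Mreg U V phi d1 eps q) q * mm22 (Mreg U V phi d1 eps q) q
         - mm12 (Mreg U V phi d1 eps q) q * mm21 (Mreg U V phi d1 eps q) q) =
  det3 q (Aop U V phi eps q (ta q)) (tb q) *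
    (eps * det3 q (ta q) (Aop U V phi eps q (tb q)) + d1 (cy q / eps) * cy (tb q) * det3 q (ta q) (Wq U V q))
  - (eps * det3 q (Aop U V phi eps q (tb q)) (tb q) + d1 (cy q / eps) * cy (tb q) * det3 q (Wq U V q) (tb q))
    * det3 q (ta q) (Aop U V phi eps q (ta q)).
Proof. intros He. unfold mm11, mm22, mm12, mm21. rewrite !Mreg_split, !det3_as2, !det3_as3.
  replace (cy (ta q)) with 0 by reflexivity. field; auto. Qed.

Lemma cv_eq u l l' : Un_cv u l -> l = l' -> Un_cv u l'.
Proof. intros H ->; auto. Qed.


Definition bad (U V : Fld) (phi d1 : R -> R) (eps : R) (q : R3) : Prop :=
  ~ (mm11 (Mreg U V phi d1 eps q) q * mm22 (Mreg U V phi d1 eps q) q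
       - mm12 (Mreg U V phi d1 eps q) q * mm21 (Mreg U V phi d1 eps q) q <> 0 /\
     mm11 (Mreg U V phi d1 eps q) q + mm22 (Mreg U V phi d1 eps q) q <> 0).

Lemma sphere_bound q : sphere q -> -1 <= cx q <= 1 /\ -1 <= cy q <= 1 /\ -1 <= cz q <= 1.
Proof. unfold sphere; intros H. repeat split; nra. Qed.

Lemma main_band U V phi d1 :
  GoodF U -> GoodF V -> D_sing_elementary (FF U) (FF V) ->
  (forall t, continuity_pt phi t) -> (forall t, continuity_pt d1 t) -> (forall t, -1 < t < 1 -> 0 < d1 t) ->
  phi 1 = 1 -> phi (-1) = 0 -> (forall t, -1 <= t <= 1 -> 0 <= phi t <= 1) ->
  exists eps0, 0 < eps0 /\ eps0 <= 1/2 /\ forall eps q, 0 < eps <= eps0 -> sphere q -> Rabs (cy q) < eps ->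
    blend (FF U) (FF V) (fun q => phi (cy q / eps)) q = v0 -> ~ bad U V phi d1 eps q.
Proof.
  intros GU GV HD Hpc Hdc Hdp Hp1 Hpm1 Hpr.
  apply NNPP; intro Hno.
  assert (Hseq : forall n:nat, exists x : R * R3, (0 < fst x <= / (INR n + 2)) /\ sphere (snd x) /\ Rabs (cy (snd x)) < fst x /\
     blend (FF U) (FF V) (fun q => phi (cy q / fst x)) (snd x) = v0 /\ bad U V phi d1 (fst x) (snd x)).
  { intro n. apply NNPP; intro Hn. apply Hno.
    assert (H2 : 2 <= INR n + 2) by (pose proof (pos_INR n); lra).
    exists (/ (INR n + 2)). split; [apply Rinv_0_lt_compat; lra|]. split.
    { replace (1/2) with (/2) by field. apply Rinv_le_contravar; lra. }
    intros eps q Heps Hs Hy Hz Hbad. apply Hn. exists (eps, q). simpl. tauto. }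
  destruct (choice_nat _ Hseq) as [f Hf].
  set (en := fun n => fst (f n)). set (qn := fun n => snd (f n)).
  assert (Hen : forall n, 0 < en n <= / (INR n + 2)) by (intro n; apply (Hf n)).
  assert (Hqs : forall n, sphere (qn n)) by (intro n; apply (Hf n)).
  assert (Hqy : forall n, Rabs (cy (qn n)) < en n) by (intro n; apply (Hf n)).
  assert (Hqz : forall n, blend (FF U) (FF V) (fun q => phi (cy q / en n)) (qn n) = v0) by (intro n; apply (Hf n)).
  assert (Hqb : forall n, bad U V phi d1 (en n) (qn n)) by (intro n; apply (Hf n)).
  clearbody en qn. clear Hf Hseq.
  assert (Hen0 : Un_cv en 0).
  { intros e He. destruct (inv_small e He) as [N HN]. exists N. intros n Hn. unfold Rdist.
    rewrite Rminus_0_r, Rabs_right by (specialize (Hen n); lra).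
    eapply Rle_lt_trans; [|apply (HN n Hn)]. eapply Rle_trans; [apply Hen|].
    apply Rinv_le_contravar; pose proof (pos_INR n); lra. }
  assert (Htn : forall n, -1 <= cy (qn n) / en n <= 1).
  { intro n. specialize (Hen n). specialize (Hqy n). apply Rabs_def2 in Hqy.
    split; [apply (Rmult_le_reg_r (en n)); [lra|]| apply (Rmult_le_reg_r (en n)); [lra|]];
    unfold Rdiv; rewrite Rmult_assoc, Rinv_l, Rmult_1_r by lra; lra. }
  destruct (BW_sub (fun n => cx (qn n)) (-1) 1 ltac:(intro; apply sphere_bound; auto)) as [s1 [x0 [I1 [C1 B1]]]].
  destruct (BW_sub (fun n => cy (qn (s1 n))) (-1) 1 ltac:(intro; apply sphere_bound; auto)) as [s2 [y0 [I2 [C2 B2]]]].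
  destruct (BW_sub (fun n => cz (qn (s1 (s2 n)))) (-1) 1 ltac:(intro; apply sphere_bound; auto)) as [s3 [z0 [I3 [C3 B3]]]].
  destruct (BW_sub (fun n => cy (qn (s1 (s2 (s3 n)))) / en (s1 (s2 (s3 n)))) (-1) 1 ltac:(intro; apply Htn)) as [s4 [t0 [I4 [C4 B4]]]].
  set (tau := fun n => s1 (s2 (s3 (s4 n)))).
  assert (I34 : forall n, (s3 (s4 n) < s3 (s4 (S n)))%nat) by (apply sub_comp; auto).
  assert (I234 : forall n, (s2 (s3 (s4 n)) < s2 (s3 (s4 (S n))))%nat) by (apply (sub_comp s2 (fun n => s3 (s4 n))); auto).
  assert (Itau : forall n, (tau n < tau (S n))%nat) by (apply (sub_comp s1 (fun n => s2 (s3 (s4 n)))); auto).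
  set (Q := fun n => qn (tau n)). set (En := fun n => en (tau n)). set (p := (x0, y0, z0)).
  assert (HQ : cv3 Q p).
  { unfold cv3, p. split; [|split].
    - exact (cv_sub _ _ (fun n => s2 (s3 (s4 n))) I234 C1).
    - exact (cv_sub _ _ (fun n => s3 (s4 n)) I34 C2).
    - exact (cv_sub _ _ s4 I4 C3). }
  assert (HT : Un_cv (fun n => cy (Q n) / En n) t0) by exact C4.
  assert (HE : Un_cv En 0) by exact (cv_sub _ _ tau Itau Hen0).
  assert (HEp : forall n, 0 < En n) by (intro n; apply Hen).
  assert (HQs : forall n, sphere (Q n)) by (intro; apply Hqs).
  assert (HQy : forall n, Rabs (cy (Q n)) < En n) by (intro; apply Hqy).
  assert (HQz : forall n, blend (FF U) (FF V) (fun q => phi (cy q / En n)) (Q n) = v0) by (intro; apply Hqz).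
  assert (HQb : forall n, bad U V phi d1 (En n) (Q n)) by (intro; apply Hqb).
  clearbody Q En tau p. clear C1 C2 C3 C4 I34 I234 Hqs Hqy Hqz Hqb Hen Hen0 Htn.
  destruct HQ as [HQx [HQy' HQz']].
  assert (Hy0 : cy p = 0).
  { apply (UL_sequence (fun n => cy (Q n))); [exact HQy'|]. apply (cv_squeeze0 _ En); auto.
    intro n; left; apply HQy. }
  assert (Hsp : sphere p).
  { assert (L1 : Un_cv (fun n => cx (Q n) * cx (Q n) + cy (Q n) * cy (Q n) + cz (Q n) * cz (Q n))
                  (cx p * cx p + cy p * cy p + cz p * cz p)) by cvt.
    assert (L2 : Un_cv (fun n => cx (Q n) * cx (Q n) + cy (Q n) * cy (Q n) + cz (Q n) * cz (Q n)) 1).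
    { apply (cv_ext (fun _ => 1)); [|apply cv_const]. intro n; specialize (HQs n); unfold sphere in HQs; simpl in HQs; lra. }
    pose proof (UL_sequence _ _ _ L1 L2) as E. unfold sphere; nra. }
  assert (HQ : cv3 Q p) by (repeat split; auto).
  assert (Hph : Un_cv (fun n => phi (cy (Q n) / En n)) (phi t0)) by (apply continuity_seq; auto).
  assert (Hd1 : Un_cv (fun n => d1 (cy (Q n) / En n)) (d1 t0)) by (apply continuity_seq; auto).
  destruct (cv3_F U Q p GU HQ) as [FUx [FUy FUz]].
  destruct (cv3_F V Q p GV HQ) as [FVx [FVy FVz]].
  assert (Zx : (1 - phi t0) * cx (FF V p) + phi t0 * cx (FF U p) = 0).
  { apply (UL_sequence (fun n => (1 - phi (cy (Q n) / En n)) * cx (FF V (Q n)) + phi (cy (Q n) / En n) * cx (FF U (Q n)))).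
    cvt. apply (cv_ext (fun _ => 0)); [|apply cv_const]. intro n. pose proof (f_equal cx (HQz n)) as H.
    unfold blend in H. rewrite cx_vadd, !cx_vscale in H. rewrite H; reflexivity. }
  assert (Zy : (1 - phi t0) * cy (FF V p) + phi t0 * cy (FF U p) = 0).
  { apply (UL_sequence (fun n => (1 - phi (cy (Q n) / En n)) * cy (FF V (Q n)) + phi (cy (Q n) / En n) * cy (FF U (Q n)))).
    cvt. apply (cv_ext (fun _ => 0)); [|apply cv_const]. intro n. pose proof (f_equal cy (HQz n)) as H.
    unfold blend in H. rewrite cy_vadd, !cy_vscale in H. rewrite H; reflexivity. }
  assert (Zz : (1 - phi t0) * cz (FF V p) + phi t0 * cz (FF U p) = 0).
  { apply (UL_sequence (fun n => (1 - phi (cy (Q n) / En n)) * cz (FF V (Q n)) + phi (cy (Q n) / En n) * cz (FF U (Q n)))).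
    cvt. apply (cv_ext (fun _ => 0)); [|apply cv_const]. intro n. pose proof (f_equal cz (HQz n)) as H.
    unfold blend in H. rewrite cz_vadd, !cz_vscale in H. rewrite H; reflexivity. }
  assert (HinD : inD p) by (split; auto).
  destruct (UV_nonzero _ _ _ HD HinD) as [HUn HVn].
  assert (Hs0 : phi t0 <> 0).
  { intro H0. apply HVn. rewrite H0 in Zx, Zy, Zz. apply R3_eq; unfold v0; rewrite ?cx_mk, ?cy_mk, ?cz_mk; lra. }
  assert (Hs1 : phi t0 <> 1).
  { intro H0. apply HUn. rewrite H0 in Zx, Zy, Zz. apply R3_eq; unfold v0; rewrite ?cx_mk, ?cy_mk, ?cz_mk; lra. }
  pose proof (Hpr t0 B4) as Hsr.
  assert (Ht0 : -1 < t0 < 1).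
  { destruct B4 as [Ba Bb]. split.
    - destruct Ba as [Ba|Ba]; auto. exfalso; apply Hs0; rewrite <- Ba; auto.
    - destruct Bb as [Bb|Bb]; auto. exfalso; apply Hs1; rewrite Bb; auto. }
  assert (Hds : 0 < d1 t0) by auto.
  set (s0 := phi t0) in *. set (ds := d1 t0) in *.
  destruct (key_point U V p s0 ds GU GV HD HinD ltac:(lra) Hds Zx Zy Zz) as [K2 K1].
  assert (cvA : forall wn w, cv3 wn w -> cv3 (fun n => Aop U V phi (En n) (Q n) (wn n))
                   (vadd (vscale (1 - s0) (DF V p w)) (vscale s0 (DF U p w)))).
  { intros wn w Hw. unfold Aop. apply cv3_vadd; apply cv3_vscale; try apply cv3_DF; auto.
    apply CV_minus; [apply cv_const|exact Hph]. }
  assert (cvW : cv3 (fun n => Wq U V (Q n)) (vadd (FF U p) (vscale (-1) (FF V p)))).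
  { unfold Wq. apply cv3_vadd; [apply cv3_F; auto|apply cv3_vscale; [apply cv_const|apply cv3_F; auto]]. }
  pose proof (cv3_ta Q p HQ) as cvta. pose proof (cv3_tb Q p HQ) as cvtb.
  assert (cvtby : Un_cv (fun n => cy (tb (Q n))) (cy (tb p))) by apply cvtb.
  assert (HEn : forall n, En n <> 0) by (intro n; specialize (HEp n); lra).
  assert (Ctr : Un_cv (fun n => En n * (mm11 (Mreg U V phi d1 (En n) (Q n)) (Q n) + mm22 (Mreg U V phi d1 (En n) (Q n)) (Q n)))
     (ds * cy (tb p) * det3 p (ta p) (vadd (FF U p) (vscale (-1) (FF V p))))).
  { eapply cv_ext. intro n; symmetry; apply expand_tr; auto.
    eapply cv_eq.
    apply CV_plus; [apply CV_plus; apply CV_mult; [exact HE| exact (cv_det3 _ _ _ _ _ _ HQ (cvA _ _ cvta) cvtb)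
       | exact HE| exact (cv_det3 _ _ _ _ _ _ HQ cvta (cvA _ _ cvtb))]|].
    apply CV_mult; [apply CV_mult; [exact Hd1|exact cvtby]| exact (cv_det3 _ _ _ _ _ _ HQ cvta cvW)]. ring. }
  assert (Cdet : Un_cv (fun n => En n * (mm11 (Mreg U V phi d1 (En n) (Q n)) (Q n) * mm22 (Mreg U V phi d1 (En n) (Q n)) (Q n)
        - mm12 (Mreg U V phi d1 (En n) (Q n)) (Q n) * mm21 (Mreg U V phi d1 (En n) (Q n)) (Q n)))
     (det3 p (vadd (vscale (1 - s0) (DF V p (ta p))) (vscale s0 (DF U p (ta p)))) (tb p) *
     (ds * cy (tb p) * det3 p (ta p) (vadd (FF U p) (vscale (-1) (FF V p)))) -
     (ds * cy (tb p) * det3 p (vadd (FF U p) (vscale (-1) (FF V p))) (tb p)) *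
     det3 p (ta p) (vadd (vscale (1 - s0) (DF V p (ta p))) (vscale s0 (DF U p (ta p)))))).
  { eapply cv_ext. intro n; symmetry; apply expand_det; auto.
    eapply cv_eq.
    apply CV_minus; apply CV_mult.
    - exact (cv_det3 _ _ _ _ _ _ HQ (cvA _ _ cvta) cvtb).
    - apply CV_plus; [apply CV_mult; [exact HE|exact (cv_det3 _ _ _ _ _ _ HQ cvta (cvA _ _ cvtb))]|
        apply CV_mult; [apply CV_mult; [exact Hd1|exact cvtby]|exact (cv_det3 _ _ _ _ _ _ HQ cvta cvW)]].
    - apply CV_plus; [apply CV_mult; [exact HE|exact (cv_det3 _ _ _ _ _ _ HQ (cvA _ _ cvtb) cvtb)]|
        apply CV_mult; [apply CV_mult; [exact Hd1|exact cvtby]|exact (cv_det3 _ _ _ _ _ _ HQ cvW cvtb)]].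
    - exact (cv_det3 _ _ _ _ _ _ HQ cvta (cvA _ _ cvta)).
    - ring. }
  destruct (cv_nonzero_eventually _ _ Ctr K2) as [N1 HN1].
  destruct (cv_nonzero_eventually _ _ Cdet K1) as [N2 HN2].
  apply (HQb (max N1 N2)). split.
  - intro H0. apply (HN2 (max N1 N2) ltac:(lia)). rewrite H0; ring.
  - intro H0. apply (HN1 (max N1 N2) ltac:(lia)). rewrite H0; ring.
Qed.


Theorem mainTheorem7 (m : nat) (X Y : PVF) :
  (1 <= m)%nat ->
  G_m1 m X Y ->
  forall phi : R -> R, transition_fun phi ->
  exists eps0 : R, 0 < eps0 /\
    forall eps : R, 0 < eps <= eps0 ->
    forall q : R3, sphere q -> regularization m X Y phi eps q = v0 ->
      hyperbolic_sing (regularization m X Y phi eps) q.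
Proof.
  intros Hm [HX [HY [HSX [HSY HDs]]]] phi Htr.
  destruct (GoodF_poinc m X) as [U [HU GU]]. destruct (GoodF_poinc m Y) as [V [HV GV]].
  destruct (phi_facts phi Htr) as [d1 [Hder [Hpc [Hdc [Hdp [Hd1r [Hd1l [Hpr1 [Hpl1 Hrange]]]]]]]]].
  rewrite <- HU, <- HV in HDs. rewrite <- HU in HSX. rewrite <- HV in HSY.
  destruct (main_band U V phi d1 GU GV HDs Hpc Hdc Hdp (Hpr1 1 (Rle_refl 1)) (Hpl1 (-1) (Rle_refl _)) Hrange)
    as [eps0 [He0 [He0' Hmain]]].
  exists eps0. split; auto. intros eps [Heps Heps'] q Hs Hz.
  rewrite reg_blend in *. rewrite <- HU, <- HV in *.
  split; [auto| split; [auto|]]. intros b u v Lu Lv Htu Htv Du Dv Eu Ev.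
  assert (Hne : eps <> 0) by lra.
  pose proof (dderiv_blend U V phi d1 eps q u Lu GU GV Hne Hder Du) as Mu.
  pose proof (dderiv_blend U V phi d1 eps q v Lv GU GV Hne Hder Dv) as Mv.
  destruct (Rlt_le_dec (Rabs (cy q)) eps) as [Hb|Hb].
  - apply NNPP; intro Hn.
    assert (Hy2 : cy q ^ 2 < 1).
    { apply Rabs_def2 in Hb. nra. }
    destruct (linalg (Mreg U V phi d1 eps q) q b u v (Mreg_lin U V phi d1 eps q) Hs Hy2 Htu Htv
      ltac:(rewrite <- Mu; auto) ltac:(rewrite <- Mv; auto) Hn) as [H0|H0];
    pose proof (Hmain eps q ltac:(lra) Hs Hb Hz) as Hg; apply Hg; intros [H1 H2]; auto.
  - destruct (Rle_lt_dec 0 (cy q)) as [Hy|Hy].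
    + rewrite Rabs_right in Hb by lra.
      assert (Ht : 1 <= cy q / eps).
      { apply (Rmult_le_reg_r eps); [lra|]. unfold Rdiv; rewrite Rmult_assoc, Rinv_l, Rmult_1_r by lra; lra. }
      pose proof (Hpr1 _ Ht) as P1. pose proof (Hd1r _ Ht) as D1.
      assert (HUz : FF U q = v0).
      { rewrite <- Hz. unfold blend. cbv beta. rewrite P1. apply R3_eq; rewrite ?cx_vadd, ?cy_vadd, ?cz_vadd, ?cx_vscale, ?cy_vscale, ?cz_vscale; ring. }
      assert (EM : forall w, Mreg U V phi d1 eps q w = DF U q w).
      { intro w. unfold Mreg. rewrite P1, D1. apply R3_eq; rewrite ?cx_vadd, ?cy_vadd, ?cz_vadd, ?cx_vscale, ?cy_vscale, ?cz_vscale; unfold Rdiv; ring. }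
      destruct HSX as [Hsing _].
      destruct (Hsing q Hs ltac:(unfold Nreg; lra) HUz) as [_ [_ Hh]].
      apply (Hh b u v (DF U q u) (DF U q v) Htu Htv (GoodF_dderiv U q u GU) (GoodF_dderiv U q v GU)).
      rewrite <- EM, <- Mu; auto. rewrite <- EM, <- Mv; auto.
    + rewrite Rabs_left in Hb by lra.
      assert (Ht : cy q / eps <= -1).
      { apply (Rmult_le_reg_r eps); [lra|]. unfold Rdiv; rewrite Rmult_assoc, Rinv_l, Rmult_1_r by lra; lra. }
      pose proof (Hpl1 _ Ht) as P1. pose proof (Hd1l _ Ht) as D1.
      assert (HVz : FF V q = v0).
      { rewrite <- Hz. unfold blend. cbv beta. rewrite P1. apply R3_eq; rewrite ?cx_vadd, ?cy_vadd, ?cz_vadd, ?cx_vscale, ?cy_vscale, ?cz_vscale; ring. }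
      assert (EM : forall w, Mreg U V phi d1 eps q w = DF V q w).
      { intro w. unfold Mreg. rewrite P1, D1. apply R3_eq; rewrite ?cx_vadd, ?cy_vadd, ?cz_vadd, ?cx_vscale, ?cy_vscale, ?cz_vscale; unfold Rdiv; ring. }
      destruct HSY as [Hsing _].
      destruct (Hsing q Hs ltac:(unfold Sreg; lra) HVz) as [_ [_ Hh]].
      apply (Hh b u v (DF V q u) (DF V q v) Htu Htv (GoodF_dderiv V q u GV) (GoodF_dderiv V q v GV)).
      rewrite <- EM, <- Mu; auto. rewrite <- EM, <- Mv; auto.
Qed.
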